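(* $L_1(z)=R(z,1)$, where $L_1(z)$ is the coefficient of $x^1$ in $L(z,x)$.
   Context: Formulas are built from atoms by a binary product: every formula is an atom or $A\bullet B$. A context is a finite (possibly empty) list of formulas; commas denote concatenation; its length is its number of formulas. Size: $|p|=0$, $|A\bullet B|=1+|A|+|B|$. Frontier: $\mathrm{fr}(p)=p$, $\mathrm{fr}(A\bullet B)=\mathrm{fr}(A),\mathrm{fr}(B)$. A context is irreducible if its leftmost formula is not a product (it is empty or begins with an atom). A focused derivation is a finite derivation tree with no undischarged premises using only: ($\bullet L$) from $A,B,\Delta\vdash C$ infer $A\bullet B,\Delta\vdash C$; ($\bullet R^{foc}$) from $\Gamma\vdash A$ and $\Delta\vdash B$ infer $\Gamma,\Delta\vdash A\bullet B$ with $\Gamma$ irreducible; ($id^{atm}$) $p\vdash p$ for atoms $p$. For each $n$ fix the frontier $p_0,\dots,p_n$ of distinct atoms. Let $\ell_{n,k}$ (resp. $r_{n,k}$) be the number of focused derivations of sequents $\Gamma\vdash B$ with $|B|=n$, $\mathrm{fr}(B)=p_0,\dots,p_n$, and $\Gamma$ a context (resp. an irreducible context) of length $k$. $L(z,x)=\sum_{n,k}\ell_{n,k}z^nx^k$ and $R(z,x)=\sum_{n,k}r_{n,k}z^nx^k$ (formal power series). *)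

(* Defs.v *)
From Stdlib Require Import List.
From mathcomp Require Import all_boot.

Set Implicit Arguments.
Unset Strict Implicit.
Unset Printing Implicit Defensive.

(* Atoms are natural numbers; the fixed frontier p_0,...,p_n is 0,...,n. *)
Inductive formula : Type :=
| Atom (p : nat)
| Prod (A B : formula).

Fixpoint fsize (A : formula) : nat :=
  match A with
  | Atom _ => 0
  | Prod A B => (fsize A + fsize B).+1
  end.

Fixpoint frontier (A : formula) : seq nat :=
  match A with
  | Atom p => [:: p]
  | Prod A B => frontier A ++ frontier B
  end.

Definition irreducible (G : seq formula) : bool :=
  match G with
  | [::] => true
  | Atom _ :: _ => true
  | Prod _ _ :: _ => false
  end.

Inductive deriv : Type :=
| DId (p : nat)
| DL (d : deriv)             (* bullet-L applied to the derivation d *)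
| DR (d1 d2 : deriv).        (* focused bullet-R with premises d1, d2 *)

(* Conclusion of a tree, or None if the tree is not a correct rule application. *)
Fixpoint concl (d : deriv) : option (seq formula * formula) :=
  match d with
  | DId p => Some ([:: Atom p], Atom p)
  | DL d =>
      match concl d with
      | Some (A :: B :: D, C) => Some (Prod A B :: D, C)
      | _ => None
      end
  | DR d1 d2 =>
      match concl d1, concl d2 with
      | Some (G, A), Some (D, B) =>
          if irreducible G then Some (G ++ D, Prod A B) else None
      | _, _ => None
      end
  end.

Definition ell_deriv (n k : nat) (d : deriv) : Prop :=
  exists G B, concl d = Some (G, B) /\ fsize B = n /\
              frontier B = iota 0 n.+1 /\ size G = k.

Definition r_deriv (n k : nat) (d : deriv) : Prop :=
  exists G B, concl d = Some (G, B) /\ fsize B = n /\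
              frontier B = iota 0 n.+1 /\ size G = k /\ irreducible G.

Definition counts (P : deriv -> Prop) (m : nat) : Prop :=
  exists s : list deriv, NoDup s /\ (forall d, P d <-> In d s) /\ length s = m.

(* Main.v *)
Require Import Defs.
From HB Require Import structures.
From mathcomp Require Import all_boot zify.

Set Implicit Arguments.
Unset Strict Implicit.
Unset Printing Implicit Defensive.

Lemma deriv_eq_dec (x y : deriv) : {x = y} + {x <> y}.
Proof. decide equality; apply: PeanoNat.Nat.eq_dec. Qed.

Definition deriv_eqb (x y : deriv) : bool := if deriv_eq_dec x y then true else false.
Lemma deriv_eqP : Equality.axiom deriv_eqb.
Proof. move=> x y; rewrite /deriv_eqb; case: deriv_eq_dec => h; [left|right]; done. Qed.
HB.instance Definition _ := hasDecEq.Build deriv deriv_eqP.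

Lemma in_In (s : seq deriv) x : x \in s <-> List.In x s.
Proof.
elim: s => [|y s IH] //=; rewrite in_cons; split.
- by case/orP => [/eqP ->|/IH]; [left|right].
- by case => [->|/IH ->]; rewrite ?eqxx ?orbT.
Qed.

Lemma uniq_NoDup (s : seq deriv) : uniq s -> List.NoDup s.
Proof.
elim: s => [|y s IH] /=; first by constructor.
case/andP => ys us; constructor; last exact: IH.
by move/in_In => h; rewrite h in ys.
Qed.

Lemma counts_count (p : pred deriv) (U : seq deriv) :
  uniq U -> (forall d, p d -> d \in U) ->
  counts (fun d => p d) (count p U).
Proof.
move=> uU cov; exists (filter p U); split; first by apply/uniq_NoDup/filter_uniq.
split; last by rewrite -size_filter.
move=> d; rewrite -in_In mem_filter; split.
- by move=> pd; rewrite pd cov.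
- by case/andP.
Qed.

Lemma size_frontier A : size (frontier A) = (fsize A).+1.
Proof. elim: A => //= A IHA B IHB; rewrite size_cat IHA IHB; lia. Qed.

Lemma concl_frontier d G B : concl d = Some (G, B) ->
  flatten (map frontier G) = frontier B.
Proof.
elim: d G B => [p|d IH|d1 IH1 d2 IH2] G B /=.
- by case=> <- <-.
- case E: (concl d) => [[[|A [|A' D]] C]|] //; case=> <- <- /=.
  by rewrite -(IH _ _ E) /= catA.
- case E1: (concl d1) => [[G1 A1]|] //; case E2: (concl d2) => [[G2 A2]|] //.
  case: ifP => // _; case=> <- <- /=.
  by rewrite map_cat flatten_cat (IH1 _ _ E1) (IH2 _ _ E2).
Qed.

Lemma concl_ctx_size d G B : concl d = Some (G, B) ->
  sumn (map fsize G) + size G = (fsize B).+1.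
Proof.
move=> /concl_frontier h; rewrite -size_frontier -h.
elim: G {h} => //= A G IH; rewrite size_cat size_frontier -IH.
lia.
Qed.

Lemma concl_nonempty d G B : concl d = Some (G, B) -> G <> [::].
Proof. by move=> /concl_ctx_size; case: G. Qed.

Fixpoint height (d : deriv) : nat :=
  match d with
  | DId _ => 1
  | DL d => (height d).+1
  | DR d1 d2 => (maxn (height d1) (height d2)).+1
  end.

Fixpoint atoms (d : deriv) : seq nat :=
  match d with
  | DId p => [:: p]
  | DL d => atoms d
  | DR d1 d2 => atoms d1 ++ atoms d2
  end.

Lemma concl_height d G B : concl d = Some (G, B) ->
  height d <= fsize B + sumn (map fsize G) + 1.
Proof.
elim: d G B => [p|d IH|d1 IH1 d2 IH2] G B /=.
- by case=> <- <-.
- case E: (concl d) => [[[|A [|A' D]] C]|] //; case=> <- <- /=.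
  have := IH _ _ E => /=; lia.
- case E1: (concl d1) => [[G1 A1]|] //; case E2: (concl d2) => [[G2 A2]|] //.
  case: ifP => // _; case=> <- <- /=.
  have := IH1 _ _ E1; have := IH2 _ _ E2; rewrite map_cat sumn_cat.
  rewrite gtn_max; lia.
Qed.

Lemma concl_atoms d G B : concl d = Some (G, B) ->
  {subset atoms d <= frontier B}.
Proof.
elim: d G B => [p|d IH|d1 IH1 d2 IH2] G B /=.
- by case=> _ <-.
- case E: (concl d) => [[[|A [|A' D]] C]|] //; case=> _ <-; exact: IH E.
- case E1: (concl d1) => [[G1 A1]|] //; case E2: (concl d2) => [[G2 A2]|] //.
  case: ifP => // _; case=> _ <- /= x; rewrite !mem_cat.
  by case/orP => [/(IH1 _ _ E1) ->|/(IH2 _ _ E2) ->]; rewrite ?orbT.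
Qed.

Fixpoint all_deriv (h a : nat) : seq deriv :=
  match h with
  | 0 => [::]
  | h'.+1 => map DId (iota 0 a) ++ map DL (all_deriv h' a) ++
             [seq DR x y | x <- all_deriv h' a, y <- all_deriv h' a]
  end.

Lemma all_derivP h a d : height d <= h -> all (fun p => p < a) (atoms d) ->
  d \in all_deriv h a.
Proof.
elim: h d => [|h IH] d; first by case: d.
case: d => [p|d|d1 d2] /=; rewrite !mem_cat.
- by rewrite andbT => _ pa; rewrite (map_f DId) // mem_iota.
- by move=> hd ad; rewrite (map_f DL) ?orbT // IH.
- rewrite ltnS geq_max all_cat => /andP[h1 h2] /andP[a1 a2].
  apply/orP; right; apply/orP; right.
  by apply/allpairsP; exists (d1, d2); rewrite /= !IH.
Qed.

Section Main.
Variable n : nat.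

Definition good (G : seq formula) (B : formula) : bool :=
  (fsize B == n) && (frontier B == iota 0 n.+1).

Definition U := undup (all_deriv (n.*2).+2 n.+1).

Lemma U_cover d G B : concl d = Some (G, B) -> good G B -> d \in U.
Proof.
move=> E /andP[/eqP hB /eqP fB]; rewrite mem_undup; apply: all_derivP.
- have := concl_height E; have := concl_ctx_size E; rewrite hB -addnn; lia.
- apply/allP => p /(concl_atoms E); rewrite fB mem_iota; lia.
Qed.

Lemma good_size G B d : concl d = Some (G, B) -> good G B -> size G <= n.+1.
Proof. move=> /concl_ctx_size h /andP[/eqP hB _]; rewrite -hB -h; lia. Qed.

Definition ellb (k : nat) (d : deriv) : bool :=
  if concl d is Some (G, B) then good G B && (size G == k) else false.
Definition rb (k : nat) (d : deriv) : bool :=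
  if concl d is Some (G, B) then good G B && irreducible G && (size G == k) else false.
Definition rany (d : deriv) : bool :=
  if concl d is Some (G, B) then good G B && irreducible G else false.

Lemma ellP k d : ell_deriv n k d <-> ellb k d.
Proof.
rewrite /ell_deriv /ellb; split.
- by case=> G [B [E [h1 [h2 h3]]]]; rewrite E /good h1 h2 h3 !eqxx.
- case: (concl d) => [[G B]|] // /andP[/andP[/eqP ? /eqP ?] /eqP ?].
  by exists G, B.
Qed.

Lemma rP k d : r_deriv n k d <-> rb k d.
Proof.
rewrite /r_deriv /rb; split.
- by case=> G [B [E [h1 [h2 [h3 h4]]]]]; rewrite E /good h1 h2 h3 h4 !eqxx.
- case: (concl d) => [[G B]|] // /andP[/andP[/andP[/eqP ? /eqP ?] ?] /eqP ?].
  by exists G, B.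
Qed.

Lemma counts_ext (P Q : deriv -> Prop) m : (forall d, P d <-> Q d) ->
  counts Q m -> counts P m.
Proof. move=> h [s [nd [hs hl]]]; exists s; split=> //; split=> // d; rewrite h; exact: hs. Qed.


Lemma sum_rb d : \sum_(k < n.+2) rb k d = rany d.
Proof.
rewrite /rb /rany; case E: (concl d) => [[G B]|]; last by rewrite big1.
case g: (good G B && irreducible G) => /=; last by rewrite big1.
have hs : size G < n.+2 by case/andP: g => g _; rewrite ltnS (good_size E g).
rewrite (bigD1 (Ordinal hs)) //= eqxx big1 // => i /negbTE.
by rewrite -(inj_eq val_inj) /= eq_sym => ->.
Qed.

Lemma sum_count (s : seq deriv) :
  \sum_(k < n.+2) count (rb k) s = count rany s.
Proof.
elim: s => [|x s IH] /=; first by rewrite big1.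
by rewrite big_split /= IH sum_rb.
Qed.

End Main.

Fixpoint strip (d : deriv) : deriv := if d is DL d' then strip d' else d.
Fixpoint unfold (A : formula) : seq formula :=
  match A with Atom p => [:: Atom p] | Prod A B => unfold A ++ [:: B] end.

Lemma unfold_irr A l : irreducible (unfold A ++ l).
Proof. by elim: A l => //= A IH B _ l; rewrite -catA. Qed.

Lemma unfold_size A : 0 < size (unfold A).
Proof. by elim: A => //= A IH B _; rewrite size_cat addn1. Qed.

Lemma irr_cons G : irreducible G -> G <> [::] -> exists p xs, G = Atom p :: xs.
Proof. by case: G => // -[p|] // xs _ _; exists p, xs. Qed.

Lemma strip_concl d A rest C : concl d = Some (A :: rest, C) ->
  concl (strip d) = Some (unfold A ++ rest, C) /\
  d = iter (size (unfold A)).-1 DL (strip d).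
Proof.
elim: d A rest C => [p|d IH|d1 IH1 d2 IH2] A rest C /=.
- by case=> <- <- <-.
- case E: (concl d) => [[[|A1 [|B1 D]] C']|] //; case=> <- <- <- /=.
  have [-> h] := IH _ _ _ E; rewrite -catA /=; split=> //.
  rewrite size_cat addn1 /=; rewrite {1}h; case: (size (unfold A1)) (unfold_size A1) => //.
- case E1: (concl d1) => [[G1 A1]|] //; case E2: (concl d2) => [[G2 A2]|] //.
  case: ifP => // irr [hG hC].
  have [p [xs hG1]] := irr_cons irr (concl_nonempty E1).
  move: hG; rewrite hG1 /= => -[<- hr]; rewrite hr hC; done.
Qed.

Lemma iterDL_concl xs d a ys C : concl d = Some (a :: xs ++ ys, C) ->
  concl (iter (size xs) DL d) = Some (foldl Prod a xs :: ys, C).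
Proof.
elim: xs a d => [|x xs IH] a d E //.
rewrite [size _]/= iterSr; apply: IH => /=; by rewrite E.
Qed.

Lemma strip_iter k d : strip (iter k DL d) = strip d.
Proof. by elim: k => //= k IH. Qed.

Lemma strip_irr d G C : concl d = Some (G, C) -> irreducible G -> strip d = d.
Proof.
case: d => //= d; case: (concl d) => [[[|A [|B D]] C']|] // [<- _] //.
Qed.

Section Main2.
Variable n : nat.

Lemma main_eq : count (ellb n 1) (U n) = count (rany n) (U n).
Proof.
rewrite -!size_filter.
have inj : {in filter (ellb n 1) (U n) &, injective strip}.
  move=> d1 d2; rewrite !mem_filter /ellb => /andP[+ _] /andP[+ _].
  case E1: (concl d1) => [[[|A1 [|? ?]] C1]|] // /andP[_ /eqP] //= _.
  case E2: (concl d2) => [[[|A2 [|? ?]] C2]|] // /andP[_ /eqP] //= _.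
  move=> hs.
  have [c1 h1] := strip_concl E1; have [c2 h2] := strip_concl E2.
  rewrite h1 h2 -hs; rewrite hs c2 !cats0 in c1; case: c1 => ->; done.
have := @perm_size _ (map strip (filter (ellb n 1) (U n))) (filter (rany n) (U n)).
rewrite size_map => -> //.
apply: uniq_perm; first by rewrite map_inj_in_uniq ?filter_uniq ?undup_uniq.
  by rewrite filter_uniq ?undup_uniq.
move=> x; rewrite mem_filter; apply/mapP/idP.
- case=> d; rewrite mem_filter /ellb => /andP[].
  case E: (concl d) => [[[|A [|? ?]] C]|] // /andP[g /eqP] //= _ _ ->.
  have [c _] := strip_concl E; rewrite cats0 in c.
  have g' : good n (unfold A) C := g.
  by rewrite /rany c g' -(cats0 (unfold A)) unfold_irr (U_cover c g').
- case/andP; rewrite /rany; case E: (concl x) => [[G C]|] // /andP[g irr] _.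
  have [p [xs hG]] := irr_cons irr (concl_nonempty E).
  have E' := @iterDL_concl xs x (Atom p) [::] C; rewrite cats0 -hG in E'.
  have E2 := E' E.
  exists (iter (size xs) DL x); last by rewrite strip_iter (strip_irr E irr).
  have g' : good n [:: foldl Prod (Atom p) xs] C := g.
  by rewrite mem_filter /ellb E2 /= eqxx g' (U_cover E2 g').
Qed.

End Main2.

Theorem proposition3p3 :
  forall n : nat,
  exists (l1 : nat) (r : nat -> nat) (N : nat),
    counts (ell_deriv n 1) l1 /\
    (forall k, counts (r_deriv n k) (r k)) /\
    (forall k, N <= k -> r k = 0) /\
    l1 = \sum_(k < N) r k.
Proof.
move=> n.
exists (count (ellb n 1) (U n)), (fun k => count (rb n k) (U n)), n.+2.
have uU : uniq (U n) by exact: undup_uniq.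
split.
  apply: (counts_ext (ellP n 1)); apply: counts_count => // d.
  rewrite /ellb; case E: (concl d) => [[G B]|] // /andP[g _]; exact: U_cover E g.
split.
  move=> k; apply: (counts_ext (rP n k)); apply: counts_count => // d.
  rewrite /rb; case E: (concl d) => [[G B]|] // /andP[/andP[g _] _]; exact: U_cover E g.
split.
  move=> k hk; rewrite -(count_pred0 (U n)); apply: eq_in_count => d _ /=.
  rewrite /rb; case E: (concl d) => [[G B]|] //.
  case g: (good n G B) => //=; rewrite (_ : (size G == k) = false) ?andbF //.
  apply/negbTE/eqP => hs.
  by have := good_size E g; rewrite hs leqNgt hk.
by rewrite sum_count main_eq.
Qed.
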